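(* Let $n>3$ be an integer and let $L(n)$ be the graph defined in the context below. Then $-1$ and $n-2$ are eigenvalues of $L(n)$ (i.e., of its adjacency matrix).
   Context: Let $[n]=\{1,2,\dots,n\}$. Let $H(n)$ be the graph whose vertex set is $\{v : v\subseteq [n],\ |v|\in\{1,2\}\}$, where two vertices $v,w$ are adjacent if and only if $v\subset w$ or $w\subset v$ (equivalently, $H(n)$ is the subgraph of the hypercube $Q_n$ induced by the vertices of weight $1$ and $2$). Let $L(n)$ be the line graph of $H(n)$: its vertices are the edges $\{\{i\},\{i,j\}\}$ of $H(n)$ (with $i\neq j$ in $[n]$), denoted $[i,ij]$, and two such vertices are adjacent iff, as edges of $H(n)$, they share exactly one endpoint. The eigenvalues of a graph are the eigenvalues of its adjacency matrix. *)

(* Defs.v *)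
From HB Require Import structures.
From mathcomp Require Import all_boot all_order all_algebra.
Set Implicit Arguments. Unset Strict Implicit. Unset Printing Implicit Defensive.
Import GRing.Theory Num.Theory.
Local Open Scope ring_scope.

(* Vertices of L(n): the edges [i, ij] of H(n), encoded as ordered pairs
   (i, j) of distinct elements of [n] = 'I_n. *)
Definition Lvert (n : nat) := {p : 'I_n * 'I_n | p.1 != p.2}.

Definition Lends (n : nat) (v : Lvert n) : {set {set 'I_n}} :=
  [set [set (val v).1]; [set (val v).1; (val v).2]].

Definition Ladj (n : nat) (v w : Lvert n) : bool :=
  #|Lends v :&: Lends w| == 1%N.

Definition L_adjmx (R : nzRingType) (n : nat) : 'M[R]_(#|{: Lvert n}|) :=
  \matrix_(a, b) (Ladj (enum_val a) (enum_val b))%:R.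

(* Main.v *)
From mathcomp Require Import all_boot all_order all_algebra.
From mathcomp Require Import ring.
Require Import Defs.
Local Open Scope ring_scope.
Import GRing.Theory Num.Theory.
Set Implicit Arguments.

Lemma sumL (R : nzRingType) n (G : 'I_n * 'I_n -> R) :
  \sum_(x : Lvert n) G (val x) = \sum_(p | p.1 != p.2) G p.
Proof. by rewrite (big_sub [pred p : 'I_n * 'I_n | p.1 != p.2]). Qed.

Lemma card2I (T:finType) (a b : T) (C : {set T}) : a != b ->
  #|[set a; b] :&: C| = ((a \in C) + (b \in C))%N.
Proof.
move=> ab.
case: (boolP (a \in C)) => ha; case: (boolP (b \in C)) => hb.
- have -> : [set a;b] :&: C = [set a;b].
    by apply/setIidPl; apply/subsetP=> x; rewrite !inE => /orP[]/eqP->.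
  by rewrite cards2 ab.
- have -> : [set a;b] :&: C = [set a].
    apply/setP=> x; rewrite !inE; case: (eqVneq x a) => [->|xa] //=.
    by case: (eqVneq x b) => [->|] //=; rewrite (negbTE hb).
  by rewrite cards1.
- have -> : [set a;b] :&: C = [set b].
    apply/setP=> x; rewrite !inE; case: (eqVneq x b) => [->|xb] //=; rewrite ?orbT //.
    by case: (eqVneq x a) => [->|] //=; rewrite (negbTE ha).
  by rewrite cards1.
- have -> : [set a;b] :&: C = set0.
    apply/setP=> x; rewrite !inE; case: (eqVneq x b) => [->|xb] //=; rewrite ?orbT ?(negbTE hb) ?andbF //.
    by case: (eqVneq x a) => [->|] //=; rewrite (negbTE ha).
  by rewrite cards0.
Qed.

Lemma set11 {T : finType} (i k : T) : ([set i] == [set k]) = (i == k).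
Proof. by apply/eqP/eqP => [/set1_inj|->]. Qed.

Lemma set12 {T : finType} (i k l : T) : k != l -> ([set i] == [set k; l]) = false.
Proof.
move=> hkl; apply/negbTE/negP => /eqP e.
by have := cards1 i; rewrite e cards2 hkl.
Qed.

Lemma set22 {T : finType} (i j k l : T) : i != j -> k != l ->
  ([set i; j] == [set k; l]) = ((i == k) && (j == l) || (i == l) && (j == k)).
Proof.
move=> hij hkl; apply/eqP/idP.
- move=> e.
  have hi : i \in [set k; l] by rewrite -e !inE eqxx.
  have hj : j \in [set k; l] by rewrite -e !inE eqxx orbT.
  move: hi hj; rewrite !inE.
  case/orP => /eqP ei; case/orP => /eqP ej; subst.
  + by rewrite eqxx in hij.
  + by rewrite !eqxx.
  + by rewrite !eqxx orbT.
  + by rewrite eqxx in hij.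
- case/orP => /andP[/eqP-> /eqP->] //; by rewrite setUC.
Qed.

Lemma LadjE n (x y : Lvert n) : Ladj x y =
  ((val x).1 == (val y).1) && ((val x).2 != (val y).2)
  || ((val x).1 == (val y).2) && ((val x).2 == (val y).1).
Proof.
case: x => [[i j] /= hij]; case: y => [[k l] /= hkl].
rewrite /Ladj /Lends /=.
have h1 : [set i] != [set i; j] :> {set 'I_n} by rewrite set12.
rewrite card2I // !inE.
rewrite set11 (set12 i k l hkl) (eq_sym _ [set k]) (set12 k i j hij) (set22 i j k l hij hkl) orbF.
case: (eqVneq i k) => [<-|ik] /=; case: (eqVneq j l) => [<-|jl] /=;
  case: (eqVneq i l) => [eil|il] /=; case: (eqVneq j k) => [ejk|jk] //=.
all: try subst.
all: rewrite ?eqxx //= in hij hkl *.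
all: move: hij hkl h1; rewrite ?andbT ?andbF ?add0n //=.
all: try by case: (_ == _).
all: by rewrite ?[_ == l]eq_sym ?[_ == i]eq_sym => /negbTE -> ?.
Qed.

Lemma mulE (R : nzRingType) n (phi : 'I_n -> 'I_n -> R) b :
 ((\row_k phi (val (enum_val k)).1 (val (enum_val k)).2) *m L_adjmx R n) 0 b =
 \sum_(j | (j != (val (enum_val b)).1) && (j != (val (enum_val b)).2))
    phi (val (enum_val b)).1 j + phi (val (enum_val b)).2 (val (enum_val b)).1.
Proof.
rewrite !mxE.
under eq_bigr do rewrite !mxE.
move: (enum_val b) => w.
transitivity (\sum_(x : Lvert n) phi (val x).1 (val x).2 * (Ladj x w)%:R).
  rewrite [RHS](reindex (fun k : 'I_#|{: Lvert n}| => enum_val k)) //; exists enum_rank => x _.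
  exact: enum_valK. exact: enum_rankK.
under eq_bigr do rewrite LadjE.
case: w => [[a c] /= hac].
rewrite (sumL _ (fun p => phi p.1 p.2 * ((p.1 == a) && (p.2 != c) || (p.1 == c) && (p.2 == a))%:R)).
rewrite -(pair_big_dep xpredT (fun i j => i != j) (fun i j => phi i j * ((i == a) && (j != c) || (i == c) && (j == a))%:R)) /=.
rewrite (bigD1 a) //= [X in _ + X](bigD1 c) /=; last by rewrite eq_sym.
rewrite [X in _ + (_ + X)]big1 ?addr0; last first.
  move=> i /andP[ia ic]; apply: big1 => j _.
  by rewrite (negbTE ia) (negbTE ic) mulr0.
congr (_ + _).
  rewrite (negbTE hac) eqxx /= big_mkcond [RHS]big_mkcond; apply: eq_bigr => j _.
  rewrite eq_sym; case: (j != a); case: (j != c) => /=; by rewrite ?mulr1 ?mulr0.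
rewrite (bigD1 a) /=; last by rewrite eq_sym.
rewrite big1 ?addr0 eq_sym (negbTE hac) !eqxx ?mulr1 //.
move=> j /andP[_ ja]; by rewrite (negbTE ja) andbF mulr0.
Qed.

Lemma rest_sum (R : nzRingType) n (f : 'I_n -> R) (a c : 'I_n) : a != c ->
  \sum_(j | (j != a) && (j != c)) f j = \sum_j f j - f a - f c.
Proof.
move=> hac; rewrite [\sum_j f j](bigD1 a) //= addrC addrK.
rewrite [\sum_(i | i != a) f i](bigD1 c) /=; last by rewrite eq_sym.
by rewrite addrC addrK.
Qed.

Theorem proposition3p3 (R : realFieldType) (n : nat) (hn : (3 < n)%N) :
  eigenvalue (L_adjmx R n) (-1) /\ eigenvalue (L_adjmx R n) ((n - 2)%N)%:R.
Proof.
have h0 : (0 < n)%N by apply: leq_trans hn.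
have h1 : (1 < n)%N by apply: leq_trans hn.
have h2 : (2 < n)%N by apply: leq_trans hn.
pose i0 := Ordinal h0. pose i1 := Ordinal h1. pose i2 := Ordinal h2.
pose g : 'I_n -> R := fun j => (j == i0)%:R - (j == i1)%:R.
have delta : forall i : 'I_n, \sum_j (j == i)%:R = 1 :> R.
  move=> i; rewrite (bigD1 i) //= eqxx big1 ?addr0 // => j /negbTE -> //.
have sg : \sum_j g j = 0 by rewrite sumrB !delta subrr.
have s1 : n%:R = (n - 2)%:R + 2 :> R.
  by rewrite -{1}(subnK (ltnW h2)) natrD.
set m : R := (n - 2)%:R in s1 *.
have gi0 : g i0 = 1 by rewrite /g eqxx /= subr0.
split; apply/eigenvalueP.
- exists (\row_k (fun i j => g j) (val (enum_val k)).1 (val (enum_val k)).2).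
    apply/rowP => b; rewrite (@mulE R n (fun i j => g j)) !mxE.
    case: (enum_val b) => [[a c] /= hac].
    rewrite rest_sum // sg.
    move: (g a) (g c) => x y; ring.
  have hx : i1 != i0 by [].
  pose x : Lvert n := exist _ (i1, i0) hx.
  apply/negP => /eqP /rowP /(_ (enum_rank x)). rewrite !mxE enum_rankK /= => h. by move: (oner_neq0 R); rewrite -{1}gi0 h eqxx.
- exists (\row_k (fun i j => (m + 1) * g i + g j) (val (enum_val k)).1 (val (enum_val k)).2).
    apply/rowP => b; rewrite (@mulE R n (fun i j => (m + 1) * g i + g j)) !mxE.
    case: (enum_val b) => [[a c] /= hac].
    rewrite rest_sum // big_split /= sumr_const card_ord -mulr_natr s1 sg.
    clear s1; move: (g a) (g c) m => x y z; ring.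
  have hx : i0 != i2 by [].
  pose x : Lvert n := exist _ (i0, i2) hx.
  apply/negP => /eqP /rowP /(_ (enum_rank x)); rewrite !mxE enum_rankK /= gi0.
  have -> : g i2 = 0.
    rewrite /g; have -> : (i2 == i0) = false by []; have -> : (i2 == i1) = false by []; by rewrite subrr.
  rewrite mulr1 addr0 /m natr1 => /eqP; by rewrite pnatr_eq0.
Qed.
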